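(* Let $G$ be a connected graph with $n\geq 2$ vertices and $m$ edges, and let $T(G)$ be its triangulation. Then $$R(T(G))=\frac{2}{3}R(G)+\frac{1}{3}R^+(G)+\frac{1}{6}R^*(G)+\frac{3m^2-n^2+2mn-2m+n}{6}.$$
   Context: All graphs are finite, undirected, without loops or multiple edges. For a connected graph $H$ and vertices $i,j$, the resistance distance $\Omega_{ij}$ is the effective resistance between $i$ and $j$ in the electrical network obtained from $H$ by replacing each edge by a unit resistor. With $d_i$ the degree of vertex $i$ in $H$ and sums over unordered pairs of distinct vertices of $H$: $R(H)=\sum_{\{i,j\}\subseteq V(H)}\Omega_{ij}$ (Kirchhoff index), $R^+(H)=\sum_{\{i,j\}\subseteq V(H)}(d_i+d_j)\Omega_{ij}$ (additive degree-Kirchhoff index), and $R^*(H)=\sum_{\{i,j\}\subseteq V(H)}d_id_j\Omega_{ij}$ (multiplicative degree-Kirchhoff index). The triangulation $T(G)$ is obtained from $G$ by adding, for each edge $uv$, a new vertex $w$ adjacent to both $u$ and $v$ (keeping the edge $uv$), so each edge becomes a triangle $uwv$. *)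

(* Defs.v *)
From HB Require Import structures.
From mathcomp Require Import all_boot all_order all_algebra.
Set Implicit Arguments. Unset Strict Implicit. Unset Printing Implicit Defensive.
Import Order.TTheory GRing.Theory Num.Theory.
Local Open Scope ring_scope.

(* A finite simple graph is a symmetric irreflexive relation e on a finType V. *)

Section Graphs.
Variable V : finType.
Variable e : rel V.

Definition deg (v : V) : nat := #|[set w | e v w]|.

Definition is_edge (A : {set V}) : bool :=
  [exists x, exists y, e x y && (A == [set x; y])].

Definition edges : {set {set V}} := [set A | is_edge A].

Definition nedges : nat := #|edges|.

Definition connected_graph : Prop := forall x y : V, connect e x y.

Definition laplacian (R : pzRingType) : 'M[R]_#|V| :=
  \matrix_(i, j) (if i == j then (deg (enum_val i))%:R
                  else - (e (enum_val i) (enum_val j))%:R).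

(* Resistance distance (effective resistance with unit resistors):
   inject a unit current at i and extract it at j; by Kirchhoff's and Ohm's
   laws the vertex potentials x satisfy  x L = e_i - e_j  (L symmetric);
   the effective resistance is the potential difference x_i - x_j.
   A solution x is obtained with the partial inverse pinvmx (it exists when
   the graph is connected, and any solution gives the same difference). *)
Definition resistance (R : fieldType) (i j : V) : R :=
  let u : 'rV[R]_#|V| :=
    \row_k ((k == enum_rank i)%:R - (k == enum_rank j)%:R) in
  let x := u *m pinvmx (laplacian R) in
  x 0 (enum_rank i) - x 0 (enum_rank j).

(* sums over unordered pairs {i,j} of distinct vertices *)
Definition kirchhoff (R : fieldType) : R :=
  \sum_(i : V) \sum_(j : V | (enum_rank i < enum_rank j)%N) resistance R i j.

Definition add_degree_kirchhoff (R : fieldType) : R :=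
  \sum_(i : V) \sum_(j : V | (enum_rank i < enum_rank j)%N)
     ((deg i + deg j)%:R * resistance R i j).

Definition mul_degree_kirchhoff (R : fieldType) : R :=
  \sum_(i : V) \sum_(j : V | (enum_rank i < enum_rank j)%N)
     ((deg i * deg j)%:R * resistance R i j).

End Graphs.

(* Triangulation T(G): vertices of G plus one new vertex per edge {u,v},
   adjacent to u and v; the original edges are kept. *)
Definition tri_vertex (V : finType) (e : rel V) : finType :=
  (V + {A : {set V} | is_edge e A})%type.

Definition tri_rel (V : finType) (e : rel V) : rel (tri_vertex e) :=
  fun a b =>
    match a, b with
    | inl x, inl y => e x y
    | inl x, inr A => x \in val A
    | inr A, inl x => x \in val A
    | inr _, inr _ => false
    end.

Arguments laplacian {V} e R.
Arguments resistance {V} e R i j.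
Arguments kirchhoff {V} e R.
Arguments add_degree_kirchhoff {V} e R.
Arguments mul_degree_kirchhoff {V} e R.
Arguments tri_rel {V} e a b.
Arguments tri_vertex {V} e.

(* Main.v *)
Require Import Defs.
From HB Require Import structures.
From mathcomp Require Import all_boot all_order all_algebra.
From mathcomp Require Import ring.
Set Implicit Arguments. Unset Strict Implicit. Unset Printing Implicit Defensive.
Import Order.TTheory GRing.Theory Num.Theory.
Local Open Scope ring_scope.

Section Generic.
Variable R : realFieldType.
Variable V : finType.
Variable e : rel V.
Hypothesis e_sym : symmetric e.
Hypothesis e_irr : irreflexive e.

Definition Lp (v w : V) : R := laplacian e R (enum_rank v) (enum_rank w).
Definition Mp (v w : V) : R := pinvmx (laplacian e R) (enum_rank v) (enum_rank w).

Lemma LpE v w : Lp v w = if v == w then (deg e v)%:R else - (e v w)%:R.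
Proof. by rewrite /Lp mxE !enum_rankK (inj_eq enum_rank_inj). Qed.

Lemma Lp_sym v w : Lp v w = Lp w v.
Proof. by rewrite !LpE eq_sym; case: eqP => [->|_] //; rewrite e_sym. Qed.

Lemma sumV (F : 'I_#|V| -> R) : \sum_k F k = \sum_v F (enum_rank v).
Proof.
rewrite (reindex (@enum_rank V)) //; exists enum_val => x _.
  exact: enum_rankK.
exact: enum_valK.
Qed.

Lemma deg_sum v : (deg e v)%:R = \sum_(u | e v u) (1 : R).
Proof.
rewrite /deg -sum1_card natr_sum; apply: eq_bigl => u; by rewrite inE.
Qed.

Lemma sum_delta (T : finType) (j : T) (F : T -> R) :
  \sum_i (i == j)%:R * F i = F j.
Proof.
rewrite (bigD1 j) //= eqxx mul1r big1 ?addr0 // => i /negbTE ->.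
by rewrite mul0r.
Qed.

Lemma lap_row (c : V -> R) v :
  \sum_w Lp v w * c w = \sum_(u | e v u) (c v - c u).
Proof.
rewrite sumrB.
have -> : \sum_(u | e v u) c v = (deg e v)%:R * c v.
  by rewrite deg_sum mulr_suml; apply: eq_bigr => *; rewrite mul1r.
rewrite (bigD1 v) //= LpE eqxx mulrC; congr (_ + _).
rewrite -sumrN big_mkcond [RHS]big_mkcond; apply: eq_bigr => w _ /=.
case: eqP => [->|/eqP w_v] /=; first by rewrite e_irr ?oppr0 ?mul0r ?oppr0.
rewrite LpE; case: eqP => [vw|_]; first by rewrite vw eqxx in w_v.
by case: (e v w); rewrite ?mulN1r ?mul1r ?oppr0 ?mulN0r ?mul0r ?mulNr.
Qed.

Lemma lap_tr : (laplacian e R)^T = laplacian e R.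
Proof.
apply/matrixP=> i j; rewrite !mxE eq_sym; case: eqP => [->|_] //.
by rewrite e_sym.
Qed.


Lemma lap_const (c : V -> R) : connected_graph e ->
  (forall v, \sum_(u | e v u) (c v - c u) = 0) -> forall a b, c a = c b.
Proof.
move=> conn H.
have H2 : \sum_v \sum_(u | e v u) (c v - c u) ^+ 2 = 0.
  have E1 : forall v, \sum_(u | e v u) (c v - c u) ^+ 2 =
      c v * \sum_(u | e v u) (c v - c u) + \sum_(u | e v u) c u * (c u - c v).
    move=> v; rewrite mulr_sumr -big_split /=; apply: eq_bigr => u _; ring.
  rewrite (eq_bigr _ (fun v _ => E1 v)) big_split /=.
  rewrite big1 ?add0r; last by move=> v _; rewrite H mulr0.
  rewrite (eq_bigr (fun v => \sum_u (if e v u then c u * (c u - c v) else 0)));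
    last by move=> v _; rewrite big_mkcond.
  rewrite exchange_big /=; apply: big1 => u _.
  rewrite -[RHS](mulr0 (c u)) -[in RHS](H u) mulr_sumr [RHS]big_mkcond; apply: eq_bigr => v _.
  by rewrite e_sym.
have H3 : forall v u, e v u -> c v = c u.
  move=> v u evu.
  move/psumr_eq0P: H2 => H2.
  have H5 : \sum_(u | e v u) (c v - c u) ^+ 2 = 0.
    by apply: H2 => // w _; apply: sumr_ge0 => *; apply: sqr_ge0.
  move/psumr_eq0P: H5 => H5.
  have /eqP := H5 (fun w _ => sqr_ge0 (c v - c w)) u evu.
  by rewrite sqrf_eq0 subr_eq0 => /eqP.
move=> a b.
have cl : closed e [pred x | c x == c a].
  by move=> x y /H3; rewrite !inE => ->.
have := closed_connect cl (conn a b); rewrite !inE eqxx => /esym/eqP.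
by [].
Qed.

Lemma sumVr (F : V -> R) : \sum_v F v = \sum_(k : 'I_#|V|) F (enum_val k).
Proof. by rewrite sumV; apply: eq_bigr => v _; rewrite enum_rankK. Qed.

Lemma lap_sub (g : 'rV[R]_#|V|) : connected_graph e -> \sum_k g 0 k = 0 ->
  (g <= laplacian e R)%MS.
Proof.
move=> conn g0; rewrite submxE; apply/eqP/rowP => j; rewrite !mxE.
set C := cokermx _.
pose c v := C (enum_rank v) j.
have Hc : forall v, \sum_(u | e v u) (c v - c u) = 0.
  move=> v; rewrite -lap_row.
  have := congr1 (fun A : 'M_#|V| => A (enum_rank v) j) (mulmx_coker (laplacian e R)).
  by rewrite !mxE sumV.
case: (pickP (fun _ : 'I_#|V| => true)) => [k0 _|h]; last first.
  by rewrite big1 // => k; have := h k.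
rewrite (eq_bigr (fun k => g 0 k * C k0 j)); last first.
  move=> k _; congr (_ * _).
  by rewrite -[k]enum_valK -[k0]enum_valK; apply: (lap_const conn Hc).
by rewrite -mulr_suml g0 mul0r.
Qed.

Lemma lap_solve (g : V -> R) : connected_graph e -> \sum_v g v = 0 ->
  forall v, \sum_(u | e v u)
    (((\row_k g (enum_val k)) *m pinvmx (laplacian e R)) 0 (enum_rank v) -
     ((\row_k g (enum_val k)) *m pinvmx (laplacian e R)) 0 (enum_rank u)) = g v.
Proof.
move=> conn g0 v.
set x := _ *m pinvmx _.
have sub : ((\row_k g (enum_val k)) <= laplacian e R)%MS.
  apply: lap_sub => //; rewrite -[RHS]g0 sumVr; apply: eq_bigr => k _; by rewrite mxE.
have := congr1 (fun A : 'rV_#|V| => A 0 (enum_rank v)) (mulmxKpV sub).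
rewrite /= [RHS]mxE enum_rankK => <-.
rewrite -(lap_row (fun u => x 0 (enum_rank u))) mxE sumV; apply: eq_bigr => w _.
by rewrite Lp_sym mulrC.
Qed.

Lemma res_M i j : resistance e R i j = Mp i i - Mp j i - Mp i j + Mp j j.
Proof.
rewrite /resistance; set M := pinvmx (laplacian e R); rewrite !mxE.
have E : forall a, \sum_k (\row_k0 ((k0 == enum_rank i)%:R - (k0 == enum_rank j)%:R)) 0 k *
   M k a = M (enum_rank i) a - M (enum_rank j) a.
  move=> a; rewrite (eq_bigr (fun k => (k == enum_rank i)%:R * M k a -
     (k == enum_rank j)%:R * M k a)); last by move=> k _; rewrite mxE mulrBl.
  by rewrite sumrB !sum_delta.
rewrite !E /Mp -/M; ring.
Qed.

Lemma res_pot (s t : V) (y : V -> R) :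
  (forall v, \sum_(u | e v u) (y v - y u) = (v == s)%:R - (v == t)%:R) ->
  resistance e R s t = y s - y t.
Proof.
move=> Hy.
set L := laplacian e R.
pose u : 'rV[R]_#|V| := \row_k ((k == enum_rank s)%:R - (k == enum_rank t)%:R).
pose Y : 'rV[R]_#|V| := \row_k y (enum_val k).
have hY : Y *m L = u.
  apply/rowP => k; rewrite !mxE -[k]enum_valK; set v := enum_val k.
  rewrite (inj_eq enum_rank_inj) (inj_eq enum_rank_inj) -Hy -lap_row sumV.
  by apply: eq_bigr => w _; rewrite mxE enum_rankK Lp_sym mulrC.
have sub : (u <= L)%MS by rewrite -hY submxMl.
set z := u *m pinvmx L.
have hz : z *m L = u by apply: mulmxKpV.
have E1 : resistance e R s t = (z *m u^T) 0 0.
  rewrite /resistance -/L -/u -/z [RHS]mxE.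
  rewrite (eq_bigr (fun k => (k == enum_rank s)%:R * z 0 k - (k == enum_rank t)%:R * z 0 k)).
    by rewrite sumrB !sum_delta.
  by move=> k _; rewrite [z 0 k]lock !mxE -lock; ring.
rewrite E1 -hY trmx_mul lap_tr mulmxA hz mxE.
rewrite (eq_bigr (fun k => (k == enum_rank s)%:R * y (enum_val k) - (k == enum_rank t)%:R * y (enum_val k))).
  by rewrite sumrB !sum_delta !enum_rankK.
by move=> k _; rewrite !mxE mulrBl.
Qed.


Lemma rowM_E (g : V -> R) u :
  ((\row_k g (enum_val k)) *m pinvmx (laplacian e R)) 0 (enum_rank u) =
  \sum_w g w * Mp w u.
Proof. by rewrite mxE sumV; apply: eq_bigr => w _; rewrite mxE enum_rankK. Qed.

Lemma lap_ones v : \sum_w Lp w v = 0.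
Proof.
rewrite (eq_bigr (fun w => Lp v w * 1)); last by move=> w _; rewrite mulr1 Lp_sym.
by rewrite (lap_row (fun _ => 1)) big1 // => *; rewrite subrr.
Qed.

Lemma foster : connected_graph e -> (0 < #|V|)%N ->
  \sum_i \sum_(j | e i j) resistance e R i j = 2 * (#|V|%:R - 1).
Proof.
move=> conn n0.
have nz : (#|V|%:R : R) != 0 by rewrite pnatr_eq0 -lt0n.
pose T := \sum_i \sum_j Lp i j * Mp i j.
have S1 : \sum_i \sum_(j | e i j) resistance e R i j = 2 * T.
  have -> : \sum_i \sum_(j | e i j) resistance e R i j =
     \sum_i \sum_(j | e i j) (Mp i i - Mp i j) + \sum_i \sum_(j | e i j) (Mp j j - Mp j i).
    rewrite -big_split; apply: eq_bigr => i _; rewrite -big_split; apply: eq_bigr => j _.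
    have h : forall a b c d : R, a - b - c + d = (a - c) + (d - b) by move=> *; ring.
    by rewrite res_M; apply: h.
  rewrite mulr2n mulrDl mul1r; congr (_ + _).
    by apply: eq_bigr => i _; rewrite -(lap_row (fun j => Mp i j)).
  rewrite (eq_bigr (fun i => \sum_j (if e i j then Mp j j - Mp j i else 0))); last first.
    by move=> i _; rewrite big_mkcond.
  rewrite exchange_big /=; apply: eq_bigr => j _.
  rewrite (lap_row (Mp j)) [RHS]big_mkcond; apply: eq_bigr => i _.
  by rewrite e_sym.
rewrite S1; congr (_ * _).
have Hi : forall i, \sum_u Lp i u * Mp i u - #|V|%:R^-1 * \sum_u Lp i u * \sum_w Mp w u
    = 1 - #|V|%:R^-1.
  move=> i.
  pose g := fun x : V => (x == i)%:R - (#|V|%:R : R)^-1.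
  have g0 : \sum_x g x = 0.
    rewrite sumrB sumr_const (eq_bigr (fun x => (x == i)%:R * 1)); last by move=> *; rewrite mulr1.
    rewrite sum_delta (_ : #|xpredT| = #|V|) // -[_ *+ #|V|]mulr_natr mulVf ?subrr //.
  have := lap_solve conn g0 i.
  rewrite /g eqxx -(lap_row (fun u => _)) => <-.
  rewrite mulr_sumr -sumrB; apply: eq_bigr => u _.
  rewrite (rowM_E (fun x => (x == i)%:R - (#|V|%:R:R)^-1)) [in RHS](eq_bigr (fun w => (w == i)%:R * Mp w u - #|V|%:R^-1 * Mp w u)); last first.
    by move=> w _; rewrite mulrBl.
  rewrite sumrB sum_delta -mulr_sumr; ring.
have : \sum_i (\sum_u Lp i u * Mp i u - #|V|%:R^-1 * \sum_u Lp i u * \sum_w Mp w u) = \sum_(i : V) (1 - (#|V|%:R : R)^-1).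
  by apply: eq_bigr => i _; exact: Hi.
rewrite sumrB.
have Z : \sum_i \sum_u Lp i u * \sum_w Mp w u = 0.
  rewrite exchange_big /= big1 // => u _; by rewrite -mulr_suml lap_ones mul0r.
rewrite -mulr_sumr Z mulr0 subr0 /T => ->.
by rewrite sumr_const (_ : #|xpredT| = #|V|) // -[_ *+ #|V|]mulr_natr mulrBl mul1r mulVf.
Qed.


Lemma Qres (g : V -> R) : \sum_i g i = 0 ->
  \sum_i \sum_j g i * Mp i j * g j =
  - (1/2) * \sum_i \sum_j g i * g j * resistance e R i j.
Proof.
move=> g0.
have E : \sum_i \sum_j g i * g j * resistance e R i j =
   \sum_i \sum_j (g i * Mp i i * g j) + \sum_i \sum_j (g i * (g j * Mp j j))
   - \sum_i \sum_j (g j * Mp j i * g i) - \sum_i \sum_j (g i * Mp i j * g j).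
  have h : forall a b c d x y : R, x * y * (a - b - c + d) = x * a * y + x * (y * d) - y * b * x - x * c * y.
    by move=> *; ring.
  rewrite (eq_bigr (fun i => \sum_j (g i * Mp i i * g j) + \sum_j (g i * (g j * Mp j j))
     - \sum_j (g j * Mp j i * g i) - \sum_j (g i * Mp i j * g j))).
    by rewrite !sumrB big_split.
  move=> i _; rewrite (eq_bigr (fun j => g i * Mp i i * g j + g i * (g j * Mp j j)
     - g j * Mp j i * g i - g i * Mp i j * g j)).
    by rewrite !sumrB big_split.
  by move=> j _; rewrite res_M; apply: h.
have P1 : \sum_i \sum_j (g i * Mp i i * g j) = 0.
  by apply: big1 => i _; rewrite -mulr_sumr g0 mulr0.
have P2 : \sum_i \sum_j (g i * (g j * Mp j j)) = 0.
  rewrite (eq_bigr (fun i => g i * \sum_j (g j * Mp j j))); last first.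
    by move=> i _; rewrite mulr_sumr.
  by rewrite -mulr_suml g0 mul0r.
rewrite E P1 P2 exchange_big /=.
set Q := \sum_i \sum_j g i * Mp i j * g j.
have h : forall q : R, q = - (1/2) * (0 + 0 - q - q) by move=> q; field.
exact: h.
Qed.

End Generic.



Section Pairs.
Variable R : realFieldType.
Variable T : finType.

Lemma pair_sum (F : T -> T -> R) : (forall i j, F i j = F j i) -> (forall i, F i i = 0) ->
  \sum_i \sum_(j | (enum_rank i < enum_rank j)%N) F i j = 1/2 * \sum_i \sum_j F i j.
Proof.
move=> Fs F0.
have E : forall i, \sum_j F i j = \sum_(j | (enum_rank i < enum_rank j)%N) F i j +
                              \sum_(j | (enum_rank j < enum_rank i)%N) F i j.
  move=> i; rewrite (bigID (fun j => (enum_rank i < enum_rank j)%N)) /=; congr (_ + _).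
  rewrite (bigID (fun j => (enum_rank j < enum_rank i)%N)) /=.
  rewrite [X in _ + X]big1 ?addr0.
    by apply: eq_bigl => j; apply: andb_idl => h; rewrite -leqNgt ltnW.
  move=> j /andP[h1 h2]; have : enum_rank i = enum_rank j.
    by apply/val_inj/eqP; rewrite eqn_leq leqNgt h2 leqNgt h1.
  by move/enum_rank_inj => ->; rewrite F0.
rewrite (eq_bigr _ (fun i _ => E i)) big_split /=.
have -> : \sum_i \sum_(j | (enum_rank j < enum_rank i)%N) F i j =
          \sum_i \sum_(j | (enum_rank i < enum_rank j)%N) F i j.
  rewrite (eq_bigr (fun i => \sum_j (if (enum_rank j < enum_rank i)%N then F i j else 0))); last first.
    by move=> i _; rewrite big_mkcond.
  rewrite exchange_big /=; apply: eq_bigr => j _; rewrite [RHS]big_mkcond.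
  by apply: eq_bigr => i _; rewrite Fs.
set S := \sum_i _.
have h : forall s : R, s = 1/2 * (s + s) by move=> s; field.
exact: h.
Qed.

End Pairs.


Section Exp.
Variable R : realFieldType.
Variable T : finType.
Lemma expand_sum (a b : T -> R) :
  \sum_s \sum_t (a s - a t) * (b s - b t) =
  2 * #|T|%:R * \sum_s a s * b s - 2 * ((\sum_s a s) * (\sum_s b s)).
Proof.
rewrite (eq_bigr (fun s => \sum_(t : T) (a s * b s) + \sum_t a t * b t
                         - a s * \sum_t b t - b s * \sum_t a t)); last first.
  move=> s _.
  rewrite (eq_bigr (fun t => a s * b s + a t * b t - a s * b t - b s * a t)).
    by rewrite !sumrB big_split /= !mulr_sumr.
  by move=> t _; ring.
rewrite !sumrB big_split /=.
rewrite (eq_bigr (fun s => #|T|%:R * (a s * b s))); last first.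
  by move=> s _; rewrite sumr_const (_ : #|xpredT| = #|T|) // mulr_natl.
rewrite sumr_const -!mulr_suml -mulr_sumr (_ : #|xpredT| = #|T|) //.
rewrite -mulr_natl; ring.
Qed.
End Exp.



Section Tri.
Variable R : realFieldType.
Variable V : finType.
Variable e : rel V.
Hypothesis e_sym : symmetric e.
Hypothesis e_irr : irreflexive e.
Hypothesis e_conn : connected_graph e.

Local Notation E := {A : {set V} | is_edge e A}.
Local Notation TV := (tri_vertex e).

Lemma tri_sym : symmetric (tri_rel e).
Proof. by case=> [x|A] [y|B] //=; apply: e_sym. Qed.

Lemma tri_irr : irreflexive (tri_rel e).
Proof. by case=> [x|A] //=; apply: e_irr. Qed.

Lemma edgeP A : is_edge e A -> exists x y, e x y /\ A = [set x; y].
Proof. by move=> /existsP[x /existsP[y /andP[exy /eqP ->]]]; exists x, y. Qed.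

Lemma card_edge (A : E) : #|val A| = 2%N.
Proof.
have [x [y [exy ->]]] := edgeP (valP A); rewrite cards2.
by case: eqP => // xy; rewrite xy e_irr in exy.
Qed.

Lemma sum_edges (P : pred {set V}) (F : {set V} -> R) :
  \sum_(A : E | P (val A)) F (val A) = \sum_(B | is_edge e B && P B) F B.
Proof.
rewrite [RHS](reindex_omap (val : E -> {set V}) insub); last first.
  by move=> B /andP[eB _]; rewrite insubT.
by apply: eq_bigl => -[B eB] /=; rewrite insubT eB /= eqxx andbT.
Qed.

Lemma sum_nbr v (F : {set V} -> R) :
  \sum_(A : E | v \in val A) F (val A) = \sum_(u | e v u) F [set v; u].
Proof.
rewrite (sum_edges (fun B => v \in B)).
rewrite (eq_bigl (fun B => B \in [set [set v; u] | u in [set u | e v u]])); last first.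
  move=> B; apply/andP/imsetP => [[/edgeP[x [y [exy ->]]] vin] | [u]].
    rewrite in_set2 in vin; case/orP: vin => /eqP vx.
      by subst x; exists y; rewrite ?inE.
    subst y.
    by exists x; [rewrite inE e_sym | rewrite setUC].
  rewrite inE => evu ->; split; last by rewrite set21.
  by apply/existsP; exists v; apply/existsP; exists u; rewrite evu eqxx.
rewrite big_imset /=; last first.
  move=> u u'; rewrite !inE => eu eu' /setP/(_ u); rewrite !in_set2 eqxx orbT.
  by move=> /esym/orP[/eqP uv|/eqP //]; rewrite uv e_irr in eu.
by apply: eq_bigl => u; rewrite inE.
Qed.

Definition tp (s : TV) : V -> R :=
  match s with
  | inl w => fun x => (x == w)%:R
  | inr A => fun x => (x \in val A)%:R / 2
  end.
Local Notation p := tp.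

Lemma sum_in (A : {set V}) (F : V -> R) :
  \sum_x (x \in A)%:R * F x = \sum_(x in A) F x.
Proof.
by rewrite [RHS]big_mkcond; apply: eq_bigr => x _; case: (x \in A); rewrite ?mul1r ?mul0r.
Qed.

Lemma p_sum s : \sum_x p s x = 1.
Proof.
case: s => [w|A] /=.
  by rewrite (eq_bigr (fun x => (x == w)%:R * 1)) ?sum_delta // => *; rewrite mulr1.
rewrite -mulr_suml (eq_bigr (fun x => (x \in val A)%:R * 1)); last by move=> *; rewrite mulr1.
by rewrite sum_in sumr_const card_edge mulfV // pnatr_eq0.
Qed.

Lemma pf_sum (f : TV -> R) x :
  \sum_b f b * p b x = f (inl x) + 1/2 * \sum_(A : E | x \in val A) f (inr A).
Proof.
rewrite big_sumType /=; congr (_ + _).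
  by rewrite (eq_bigr (fun w => (w == x)%:R * f (inl w))) ?sum_delta // => w _; rewrite mulrC eq_sym.
rewrite mulr_sumr [RHS]big_mkcond; apply: eq_bigr => A _.
by case: (x \in val A); rewrite /= ?mul1r ?mul0r ?mulr0 // mulrC.
Qed.

Lemma sum_pair v u (Y : V -> R) : u != v ->
  \sum_x (x \in [set v; u])%:R / 2 * Y x = (Y v + Y u) / 2.
Proof.
move=> uv.
rewrite (eq_bigr (fun x => 2^-1 * ((x == v)%:R * Y x) + 2^-1 * ((x == u)%:R * Y x))).
  by rewrite big_split /= -!mulr_sumr !sum_delta mulrC mulrDl; congr (_ + _); rewrite mulrC.
move=> x _; rewrite in_set2; case: (eqVneq x v) => [->|xv] /=.
  by rewrite eq_sym (negbTE uv) /=; ring.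
by case: (x == u); rewrite /=; ring.
Qed.

End Tri.



Section Tri2.
Variable R : realFieldType.
Variable V : finType.
Variable e : rel V.
Hypothesis e_sym : symmetric e.
Hypothesis e_irr : irreflexive e.
Hypothesis e_conn : connected_graph e.

Local Notation E := {A : {set V} | is_edge e A}.
Local Notation TV := (tri_vertex e).
Local Notation p := (tp R (e := e)).

Lemma sum_sumType (I1 I2 : finType) (P : pred (I1 + I2)) (F : I1 + I2 -> R) :
  \sum_(i | P i) F i = \sum_(i | P (inl i)) F (inl i) + \sum_(i | P (inr i)) F (inr i).
Proof. exact: big_sumType. Qed.

Lemma tri_res (s t : TV) :
  resistance (tri_rel e) R s t =
  2/3 * (\sum_i \sum_j (p s i - p t i) * Mp R e i j * (p s j - p t j))
  + 1/2 * \sum_(A : E) ((inr A == s)%:R - (inr A == t)%:R) ^+ 2.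
Proof.
pose g x := p s x - p t x.
have g0 : \sum_x g x = 0 by rewrite sumrB !p_sum // subrr.
pose X v := \sum_w g w * Mp R e w v.
have hX : forall v, \sum_(u | e v u) (X v - X u) = g v.
  move=> v; rewrite -(lap_solve e_sym e_irr e_conn g0 v).
  by apply: eq_bigr => u _; rewrite !rowM_E.
pose f (b : TV) : R := (b == s)%:R - (b == t)%:R.
have Eg : forall x, g x = \sum_b f b * p b x.
  move=> x; rewrite (eq_bigr (fun b => (b == s)%:R * p b x - (b == t)%:R * p b x)).
    by rewrite sumrB !sum_delta.
  by move=> b _; rewrite mulrBl.
pose Y v := 2/3 * X v.
pose y (b : TV) : R := match b with
  | inl v => Y v
  | inr A => \sum_x p (inr A) x * Y x + f (inr A) / 2 end.
have Hy : forall b, \sum_(c | tri_rel e b c) (y b - y c) = f b.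
  move=> [v|A]; rewrite sum_sumType.
    rewrite [X in X + _](eq_bigl (fun u => e v u)) //.
    rewrite [X in X + _](eq_bigr (fun u => Y v - Y u)) //.
    rewrite [X in _ + X](eq_bigl (fun A : E => v \in val A)) //.
    rewrite [X in _ + X](eq_bigr (fun A : E => (Y v - \sum_x ((x \in val A)%:R / 2) * Y x) - 1/2 * f (inr A))); last first.
      by move=> A _; rewrite /y /p; ring.
    rewrite [X in _ + X]sumrB -(@mulr_sumr _ _ _ _ _ (1/2 : R)).
    rewrite (sum_nbr e_sym e_irr v (fun B => Y v - \sum_x (x \in B)%:R / 2 * Y x)).
    rewrite [X in _ + (X - _)](eq_bigr (fun u => Y v - (Y v + Y u) / 2)); last first.
      move=> u evu; rewrite sum_pair //; apply/eqP => uv; by rewrite uv e_irr in evu.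
    rewrite addrA -big_split /=.
    rewrite (eq_bigr (fun u => X v - X u)); last by move=> u _; rewrite /Y; field.
    rewrite hX Eg pf_sum; ring.
  rewrite [X in _ + X]big_pred0_eq addr0.
  rewrite (eq_bigl (fun x => x \in val A)) //.
  rewrite (eq_bigr (fun x => y (inr A) - Y x)) //.
  rewrite sumrB sumr_const card_edge //.
  rewrite /y (eq_bigr (fun x => 2^-1 * ((x \in val A)%:R * Y x))); last first.
    by move=> x _; rewrite /tp /=; ring.
  by rewrite -mulr_sumr sum_in mulr2n; field.
rewrite (res_pot (tri_sym e_sym) (tri_irr e_irr) Hy).
have E1 : y s - y t = \sum_b f b * y b.
  rewrite (eq_bigr (fun b => (b == s)%:R * y b - (b == t)%:R * y b)).
    by rewrite sumrB !sum_delta.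
  by move=> b _; rewrite mulrBl.
have E2 : \sum_b f b * y b = \sum_b f b * (\sum_x p b x * Y x) + 1/2 * \sum_(A : E) f (inr A) ^+ 2.
  rewrite !big_sumType /= -addrA; congr (_ + _).
    by apply: eq_bigr => v _; rewrite (eq_bigr (fun x => (x == v)%:R * Y x)) ?sum_delta.
  rewrite mulr_sumr -big_split /=; apply: eq_bigr => A _; ring.
have E3 : \sum_x g x * Y x = \sum_b f b * (\sum_x p b x * Y x).
  rewrite (eq_bigr (fun x => \sum_b f b * p b x * Y x)); last by move=> x _; rewrite Eg mulr_suml.
  rewrite exchange_big /=; apply: eq_bigr => b _; rewrite mulr_sumr; apply: eq_bigr => x _.
  by rewrite mulrA.
have E4 : \sum_x g x * Y x = 2/3 * \sum_i \sum_j g i * Mp R e i j * g j.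
  rewrite (eq_bigr (fun x => 2/3 * (g x * X x))); last by move=> x _; rewrite /Y; ring.
  rewrite -mulr_sumr; congr (_ * _).
  rewrite (eq_bigr (fun x => \sum_w g w * Mp R e w x * g x)); last first.
    by move=> x _; rewrite /X mulrC mulr_suml.
  by rewrite exchange_big.
by rewrite E1 E2 -E3 E4.
Qed.

End Tri2.



Section Fin.
Variable R : realFieldType.

Lemma res_sym (T : finType) (r : rel T) i j : resistance r R i j = resistance r R j i.
Proof. rewrite !res_M; ring. Qed.

Lemma res_ii (T : finType) (r : rel T) i : resistance r R i i = 0.
Proof. rewrite res_M; ring. Qed.

Lemma sum4 (T U : finType) (F : T -> T -> U -> U -> R) :
  \sum_s \sum_t \sum_i \sum_j F s t i j = \sum_i \sum_j \sum_s \sum_t F s t i j.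
Proof.
rewrite (eq_bigr (fun s => \sum_i \sum_t \sum_j F s t i j)); last by move=> s _; exact: exchange_big.
rewrite exchange_big; apply: eq_bigr => i _.
rewrite (eq_bigr (fun s => \sum_j \sum_t F s t i j)); last by move=> s _; exact: exchange_big.
exact: exchange_big.
Qed.

Lemma sum3 (T U : finType) (F : T -> T -> U -> R) :
  \sum_s \sum_t \sum_i F s t i = \sum_i \sum_s \sum_t F s t i.
Proof.
rewrite (eq_bigr (fun s => \sum_i \sum_t F s t i)); last by move=> s _; exact: exchange_big.
exact: exchange_big.
Qed.

Lemma sum2_lin (T : finType) (a b : R) (X Y : T -> T -> R) :
  \sum_s \sum_t (a * X s t + b * Y s t) = a * \sum_s \sum_t X s t + b * \sum_s \sum_t Y s t.
Proof.
rewrite !mulr_sumr -big_split; apply: eq_bigr => s _.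
by rewrite !mulr_sumr -big_split.
Qed.

Variable V : finType.
Variable e : rel V.
Hypothesis e_sym : symmetric e.
Hypothesis e_irr : irreflexive e.
Hypothesis e_conn : connected_graph e.

Local Notation E := {A : {set V} | is_edge e A}.
Local Notation TV := (tri_vertex e).
Local Notation p := (tp R (e := e)).

Lemma C_lem i j : i != j -> \sum_(s : TV) p s i * p s j = (e i j)%:R / 4.
Proof.
move=> ij; rewrite sum_sumType big1 ?add0r; last first.
  move=> w _ /=; case: (eqVneq i w) => [iw|]; last by rewrite mul0r.
  by rewrite -iw eq_sym (negbTE ij) mulr0.
rewrite (eq_bigr (fun A : E => 4^-1 * ((i \in val A)%:R * (j \in val A)%:R))); last first.
  by move=> A _ /=; field.
rewrite -mulr_sumr big_mkcond /=.
rewrite (eq_bigr (fun A : E => if i \in val A then (fun B => (j \in B)%:R) (val A) else 0)); last first.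
  by move=> A _; case: (i \in val A); rewrite ?mul1r ?mul0r.
rewrite -big_mkcond (sum_nbr e_sym e_irr i (fun B => (j \in B)%:R)) /=.
rewrite (eq_bigr (fun u => (j == u)%:R)); last first.
  by move=> u _; rewrite in_set2 eq_sym (negbTE ij).
rewrite big_mkcond (eq_bigr (fun u => (u == j)%:R * (e i u)%:R)); last first.
  by move=> u _; rewrite eq_sym; case: (e i u); case: (u == j); rewrite ?mul1r ?mul0r ?mulr0.
by rewrite sum_delta mulrC.
Qed.

Lemma P_lem i : \sum_(s : TV) p s i = 1 + (deg e i)%:R / 2.
Proof.
rewrite sum_sumType; congr (_ + _).
  by rewrite (eq_bigr (fun w => (w == i)%:R * 1)) ?sum_delta // => w _ /=; rewrite mulr1 eq_sym.
rewrite (eq_bigr (fun A : E => 2^-1 * (i \in val A)%:R)); last first.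
  by move=> A _ /=; rewrite mulrC.
rewrite -mulr_sumr big_mkcond /=.
rewrite (eq_bigr (fun A : E => if i \in val A then (fun B : {set V} => (1:R)) (val A) else 0)); last first.
  by move=> A _; case: (i \in val A).
rewrite -big_mkcond (sum_nbr e_sym e_irr i (fun B => (1:R))) /= -deg_sum mulrC.
by [].
Qed.

Lemma card_TV : (#|TV|%:R : R) = #|V|%:R + (nedges e)%:R.
Proof.
rewrite card_sum natrD; congr (_ + _%:R).
rewrite card_sig /nedges /edges cardsE.
by [].
Qed.

End Fin.



Lemma sum2_lin3 (R : realFieldType) (T : finType) (a b c : R) (X Y Z : T -> T -> R) :
  \sum_s \sum_t (a * X s t + b * Y s t + c * Z s t) =
  a * \sum_s \sum_t X s t + b * \sum_s \sum_t Y s t + c * \sum_s \sum_t Z s t.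
Proof.
rewrite -sum2_lin -[X in X + _]mul1r -sum2_lin.
by apply: eq_bigr => s _; apply: eq_bigr => t _; rewrite mul1r.
Qed.

Unset Implicit Arguments.
Set Strict Implicit.
Theorem theorem4p3 (R : realFieldType) (V : finType) (e : rel V)
    (e_sym : symmetric e) (e_irr : irreflexive e)
    (e_conn : connected_graph e) (n_ge2 : (2 <= #|V|)%N) :
  let n : R := (#|V|)%:R in
  let m : R := (nedges e)%:R in
  kirchhoff (tri_rel e) R =
    2 / 3 * kirchhoff e R + 1 / 3 * add_degree_kirchhoff e R
    + 1 / 6 * mul_degree_kirchhoff e R
    + (3 * m ^+ 2 - n ^+ 2 + 2 * m * n - 2 * m + n) / 6.
Proof.
move=> n m.
pose pp := tp R (e := e).
rewrite /kirchhoff /add_degree_kirchhoff /mul_degree_kirchhoff.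
rewrite (pair_sum (F := fun s t => resistance (tri_rel e) R s t)); last 2 first.
- exact: res_sym.
- exact: res_ii.
rewrite (pair_sum (F := fun i j => resistance e R i j)); last 2 first.
- exact: res_sym.
- exact: res_ii.
rewrite (pair_sum (F := fun i j => (deg e i + deg e j)%:R * resistance e R i j)); last 2 first.
- by move=> i j; rewrite addnC res_sym.
- by move=> i; rewrite res_ii mulr0.
rewrite (pair_sum (F := fun i j => (deg e i * deg e j)%:R * resistance e R i j)); last 2 first.
- by move=> i j; rewrite mulnC res_sym.
- by move=> i; rewrite res_ii mulr0.
set A1 := \sum_i \sum_j resistance e R i j.
set A2 := \sum_i \sum_j (deg e i + deg e j)%:R * resistance e R i j.
set A3 := \sum_i \sum_j (deg e i * deg e j)%:R * resistance e R i j.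
set N : R := #|tri_vertex e|%:R.
pose S1 := \sum_(s : tri_vertex e) \sum_(t : tri_vertex e) \sum_i \sum_j
   (pp s i - pp t i) * (pp s j - pp t j) * resistance e R i j.
pose S2 := \sum_(s : tri_vertex e) \sum_(t : tri_vertex e) \sum_(A : {A : {set V} | is_edge e A})
   (((inr A == s)%:R - (inr A == t)%:R) ^+ 2 : R).
have HT : \sum_s \sum_t resistance (tri_rel e) R s t = -(1/3) * S1 + 1/2 * S2.
  rewrite -sum2_lin; apply: eq_bigr => s _; apply: eq_bigr => t _.
  rewrite tri_res // (Qres e (g := fun x => pp s x - pp t x)) /=; last first.
    by rewrite sumrB !p_sum // subrr.
  have h : forall X Y : R, 2/3 * (-(1/2) * X) + 1/2 * Y = -(1/3) * X + 1/2 * Y by move=> *; field.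
  exact: h.
have HS1 : S1 = 2 * N * (1/4 * (2 * (#|V|%:R - 1))) - 2 * (A1 + 1/2 * A2 + 1/4 * A3).
  rewrite /S1 sum4.
  have Hij : forall i j, \sum_(s : tri_vertex e) \sum_(t : tri_vertex e)
      (pp s i - pp t i) * (pp s j - pp t j) * resistance e R i j =
      (2 * N) * (resistance e R i j * (e i j)%:R / 4) +
      (-2) * (resistance e R i j * (\sum_s pp s i) * (\sum_s pp s j)).
    move=> i j.
    have -> : \sum_(s : tri_vertex e) \sum_(t : tri_vertex e)
      (pp s i - pp t i) * (pp s j - pp t j) * resistance e R i j =
      (\sum_(s : tri_vertex e) \sum_(t : tri_vertex e)
      (pp s i - pp t i) * (pp s j - pp t j)) * resistance e R i j.
      by rewrite mulr_suml; apply: eq_bigr => s _; rewrite mulr_suml.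
    rewrite (expand_sum (fun s => pp s i) (fun s => pp s j)).
    case: (eqVneq i j) => [<-|ij].
      rewrite res_ii.
      by rewrite !(mulr0, mul0r) addr0.
    rewrite (C_lem R e_sym e_irr ij).
    have h : forall a b c d r : R, (2 * a * (b / 4) - 2 * (c * d)) * r = 2 * a * (r * b / 4) + (-2) * (r * c * d).
      by move=> *; ring.
    exact: h.
  rewrite (eq_bigr (fun i => \sum_j ((2 * N) * (resistance e R i j * (e i j)%:R / 4) +
      (-2) * (resistance e R i j * (\sum_s pp s i) * (\sum_s pp s j))))); last first.
    by move=> i _; apply: eq_bigr => j _; apply: Hij.
  rewrite sum2_lin.
  have F1 : \sum_i \sum_j resistance e R i j * (e i j)%:R / 4 = 1/4 * (2 * (#|V|%:R - 1)).
    rewrite -(foster R e_sym e_irr e_conn (ltnW n_ge2)).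
    rewrite mulr_sumr; apply: eq_bigr => i _; rewrite mulr_sumr [RHS]big_mkcond.
    by apply: eq_bigr => j _; case: (e i j) => /=; field.
  have F2 : \sum_i \sum_j resistance e R i j * (\sum_s pp s i) * (\sum_s pp s j)
      = A1 + 1/2 * A2 + 1/4 * A3.
    rewrite /A1 /A2 /A3 -[X in X + _ + _]mul1r -sum2_lin3.
    apply: eq_bigr => i _; apply: eq_bigr => j _.
    rewrite !P_lem // natrD natrM.
    have h : forall r a b : R, r * (1 + a / 2) * (1 + b / 2) = 1 * r + 1/2 * ((a + b) * r) + 1/4 * (a * b * r).
      by move=> *; field.
    exact: h.
  rewrite F1 F2.
  have h : forall a b c : R, 2 * a * b + (-2) * c = 2 * a * b - 2 * c by move=> *; ring.
  exact: h.
have HS2 : S2 = (nedges e)%:R * (2 * N - 2).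
  rewrite /S2 sum3.
  rewrite (eq_bigr (fun A => 2 * N - 2)); last first.
    move=> A _.
    pose a (s : tri_vertex e) : R := (s == inr A)%:R.
    rewrite (eq_bigr (fun s => \sum_t (a s - a t) * (a s - a t))); last first.
      by move=> s _; apply: eq_bigr => t _; rewrite expr2 /a ![inr A == _]eq_sym.
    rewrite expand_sum.
    have Ha1 : \sum_s a s * a s = 1 by rewrite sum_delta /a eqxx.
    have Ha2 : \sum_s a s = 1.
      by rewrite (eq_bigr (fun s => (s == inr A)%:R * 1)) ?sum_delta // => s _; rewrite mulr1.
    rewrite Ha1 Ha2 /N.
    have h : forall x : R, 2 * x * 1 - 2 * (1 * 1) = 2 * x - 2 by move=> *; ring.
    exact: h.
  rewrite sumr_const [RHS]mulr_natl; congr (_ *+ _).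
  by rewrite card_sig /nedges /edges cardsE.
rewrite HT HS1 HS2 /N card_TV /n /m.
have h : forall A1 A2 A3 n m : R,
  1 / 2 * (- (1 / 3) * (2 * (n + m) * (1 / 4 * (2 * (n - 1))) - 2 * (A1 + 1 / 2 * A2 + 1 / 4 * A3))
   + 1 / 2 * (m * (2 * (n + m) - 2))) =
  2 / 3 * (1 / 2 * A1) + 1 / 3 * (1 / 2 * A2) + 1 / 6 * (1 / 2 * A3) +
  (3 * m ^+ 2 - n ^+ 2 + 2 * m * n - 2 * m + n) / 6.
  by move=> *; field.
exact: h.
Qed.
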